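(* Let $n = n(j) = m_1 + m_2 + \cdots + m_j$ with $1 \leq j \leq j_{\max}$ (i.e., $n$ corresponds to the end of the $j$-th block of the deflated block-Krylov matrix). Then, in the Hermitian case described below, the data matrices $\mathcal A_n = \mathcal V_n^H \mathcal A\, \mathcal V_n$, $\mathcal E_n = \mathcal V_n^H \mathcal E\, \mathcal V_n$, $\mathcal B_n = \mathcal V_n^H \mathcal B$, $\mathcal L_n = \mathcal L\, \mathcal V_n$, $\mathcal D_n = \mathcal D$ of the structure-preserving Padé-type model satisfy \[ \mathcal L\, \mathcal M^i\, \mathcal V_n = \mathcal L_n\, \mathcal M_n^i\quad \mbox{for all}\quad i=0,1,\dots,j. \]
   Context: Consider a first-order system $\mathcal E\, \frac{d}{dt} z(t) - \mathcal A\, z(t) = \mathcal B\, u(t)$, $y(t) = \mathcal D\, u(t) + \mathcal L\, z(t)$, with regular pencil $s\mathcal E - \mathcal A$ and transfer function $H(s) = \mathcal D + \mathcal L (s\mathcal E - \mathcal A)^{-1}\mathcal B$, which is the equivalent first-order formulation of one of the following Hermitian systems. (a) A Hermitian special second-order system $P_1 \frac{d}{dt}x + P_0 x + P_{-1}\int_{t_0}^t x\,d\tau = B u$, $y = D u + L x$, with either $P_{-1} = F_1 G F_2^H$ or $P_{-1} = F_1 G^{-1} F_2^H$ ($G$ nonsingular), where Hermitian means $L = B^H$, $P_0 = P_0^H$, $P_1 = P_1^H$, $F_1 = F_2$, $G = G^H$. Here $P_0,P_1\in\mathbb{C}^{N\times N}$, $G\in\mathbb{C}^{N_0\times N_0}$,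 and the first-order data are $\mathcal B = \begin{bmatrix} B\\ 0\end{bmatrix}$, $\mathcal L = \begin{bmatrix} L & 0\end{bmatrix}$, $\mathcal D = D$, and either $\mathcal A = \begin{bmatrix} -P_0 & -F_1 G\\ (F_2G)^H & 0\end{bmatrix}$, $\mathcal E = \begin{bmatrix} P_1 & 0\\ 0 & G^H\end{bmatrix}$ (first case) or $\mathcal A = \begin{bmatrix} -P_0 & -F_1\\ F_2^H & 0\end{bmatrix}$, $\mathcal E = \begin{bmatrix} P_1 & 0\\ 0 & G\end{bmatrix}$ (second case). (b) A Hermitian $l$-th order system $P_l x^{(l)} + \cdots + P_1 x' + P_0 x = B u$, $y = D u + L_{l-1}x^{(l-1)} + \cdots + L_0 x$, where Hermitian means $P_i = P_i^H$ ($0\le i\le l$), $L_0 = B^H$, $L_j = 0$ ($1\le j\le l-1$); the first-order data are the companion form with state $(x, x', \dots, x^{(l-1)})$: $\mathcal E = \mathrm{diag}(I,\dots,I,P_l)$, $\mathcal A = -\begin{bmatrix} 0 & -I & & \\ & \ddots & \ddots & \\ & & 0 & -I\\ P_0 & P_1 & \cdots & P_{l-1}\end{bmatrix}$, $\mathcal B = \begin{bmatrix}0\\ \vdots\\ 0\\ B\end{bmatrix}$, $\mathcal L = \begin{bmatrix} L_0 & L_1 & \cdots & L_{l-1}\end{bmatrix}$, $\mathcal D = D$. Let $s_0 \in \mathbb{R}$ with $s_0\mathcal E - \mathcal A$ nonsingular, and set $\mathcal M = (s_0\mathcal E - \mathcal A)^{-1}\mathcal E$, $\mathcal R = (s_0\mathcal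 E - \mathcal A)^{-1}\mathcal B$. Deflating the block-Krylov matrix $[\mathcal R,\ \mathcal M\mathcal R,\ \mathcal M^2\mathcal R,\dots]$ (deleting columns linearly dependent on earlier ones) gives $[\mathcal R^{(1)},\ \mathcal M\mathcal R^{(2)},\dots,\mathcal M^{j_{\max}-1}\mathcal R^{(j_{\max})}]$ where block $\mathcal R^{(j)}$ has $m_j$ columns; for $n = m_1+\cdots+m_j$, the block-Krylov subspace is $\mathcal K_n(\mathcal M,\mathcal R) = \mathrm{range}[\mathcal R^{(1)}, \mathcal M\mathcal R^{(2)}, \dots, \mathcal M^{j-1}\mathcal R^{(j)}]$. The projection matrix $\mathcal V_n$ is: in case (a), $\mathcal V_n = \begin{bmatrix} V_1 & 0\\ 0 & V_2\end{bmatrix}$, where $\begin{bmatrix} V_1\\ V_2\end{bmatrix}$ ($V_1$ with $N$ rows, $V_2$ with $N_0$ rows) is any matrix whose columns span $\mathcal K_n(\mathcal M,\mathcal R)$ (and $V_2^H G V_2$ is nonsingular); in case (b), $\mathcal V_n = \mathrm{diag}(S_n,\dots,S_n)$ ($l$ copies) with $S_n\in\mathbb{C}^{N\times n}$, $S_n^H S_n = I_n$, chosen so that $\mathcal K_n(\mathcal M,\mathcal R)\subseteq \mathrm{range}\,\mathcal V_n$. The projected pencil $s\mathcal E_n - \mathcal A_n$ is assumed regular and $s_0\mathcal E_n - \mathcal A_n$ nonsingular, and $\mathcal M_n = (s_0\mathcal E_n - \mathcal A_n)^{-1}\mathcal E_n$, $\mathcal R_n = (s_0\mathcal E_n - \mathcal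 A_n)^{-1}\mathcal B_n$. *)

(* Defs.v *)
(* Complex scalars: an arbitrary numClosedFieldType C
   (e.g. algC, or R[i] for a real closed field R); conjugation is conjC. *)
From mathcomp Require Import all_boot all_order all_algebra.
Set Implicit Arguments.
Unset Strict Implicit.
Unset Printing Implicit Defensive.
Import Order.TTheory GRing.Theory Num.Theory.
Local Open Scope ring_scope.

Section Generic.
Variable C : numClosedFieldType.

Definition ctr (m n : nat) (A : 'M[C]_(m, n)) : 'M[C]_(n, m) := (map_mx Num.conj A)^T.

Definition regular_pencil (K : nat) (E A : 'M[C]_K) : bool :=
  \det ('X *: map_mx polyC E - map_mx polyC A) != 0.

Variables (K m : nat) (E A : 'M[C]_K) (B : 'M[C]_(K, m)) (s0 : C).

Definition Mmx : 'M[C]_K := invmx (s0 *: E - A) *m E.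
Definition Rmx : 'M[C]_(K, m) := invmx (s0 *: E - A) *m B.

(* the l-th column of M^k R, stored as a row vector (mxalgebra works with row spaces) *)
Definition kv (k : nat) (l : 'I_m) : 'rV[C]_K := (col l (Mmx ^+ k *m Rmx))^T.

(* greedy deflation, scanning the columns of [R, M R, M^2 R, ...] from left to right:
   a column is deleted iff it lies in the span of the columns kept so far *)
Definition defl_step (k : nat) (S : 'M[C]_K) (l : 'I_m) : 'M[C]_K :=
  if (kv k l <= S)%MS then S else (S + kv k l)%MS.

(* span of the kept columns of the first k blocks (blocks 0..k-1, i.e. R, ..., M^(k-1) R) *)
Fixpoint span_upto (k : nat) : 'M[C]_K :=
  match k with
  | 0 => 0
  | k'.+1 => foldl (defl_step k') (span_upto k') (enum 'I_m)
  end.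

Definition span_before (k : nat) (l : 'I_m) : 'M[C]_K :=
  foldl (defl_step k) (span_upto k) [seq l' : 'I_m <- enum 'I_m | (l' < l)%N].

Definition kept (k : nat) (l : 'I_m) : bool := ~~ (kv k l <= span_before k l)%MS.

(* m_{k+1} : number of columns of the (k+1)-th block M^k R^(k+1) of the deflated matrix *)
Definition mblock (k : nat) : nat := #|[pred l | kept k l]|.

Definition nblk (j : nat) : nat := (\sum_(k < j) mblock k)%N.

Definition krylov_row_space (j : nat) : 'M[C]_K := span_upto j.

End Generic.

Definition Mn (C : numClosedFieldType) (K q : nat) (E A : 'M[C]_K) (V : 'M[C]_(K, q))
  (s0 : C) : 'M[C]_q :=
  invmx (s0 *: (ctr V *m E *m V) - ctr V *m A *m V) *m (ctr V *m E *m V).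

Definition moment_identity (C : numClosedFieldType) (K p q : nat) (E A : 'M[C]_K)
  (L : 'M[C]_(p, K)) (V : 'M[C]_(K, q)) (s0 : C) (j : nat) : Prop :=
  forall i : nat, (i <= j)%N ->
    L *m (Mmx E A s0) ^+ i *m V = (L *m V) *m (Mn E A V s0) ^+ i.

Definition common_hyps (C : numClosedFieldType) (K m q : nat) (E A : 'M[C]_K)
  (B : 'M[C]_(K, m)) (V : 'M[C]_(K, q)) (s0 : C) (j : nat) : Prop :=
  s0 \is Num.real /\
  regular_pencil E A /\
  (s0 *: E - A) \in unitmx /\
  (1 <= j)%N /\
  (0 < mblock E A B s0 j.-1)%N /\  (* block j is present, i.e. j <= j_max *)
  regular_pencil (ctr V *m E *m V) (ctr V *m A *m V) /\
  (s0 *: (ctr V *m E *m V) - ctr V *m A *m V) \in unitmx.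

(* companion-form first-order data of an l-th order system, l >= 1 *)
Section Companion.
Variables (C : numClosedFieldType) (l N m p : nat).
Local Notation sz := (\sum_(i < l) N)%N.
Definition is_last (i : 'I_l) : bool := (i.+1 == l)%N.

Definition companE (Pl : 'M[C]_N) : 'M[C]_sz :=
  \mxblock_(i < l, k < l)
     (if i == k then (if is_last i then Pl else 1%:M) else (0 : 'M[C]_N)).

Definition companA (P : 'I_l -> 'M[C]_N) : 'M[C]_sz :=
  - \mxblock_(i < l, k < l)
     (if is_last i then P k
      else if (k == i.+1 :> nat) then - (1%:M : 'M[C]_N) else 0).

Definition companB (B : 'M[C]_(N, m)) : 'M[C]_(sz, m) :=
  \mxcol_(i < l) (if is_last i then B else (0 : 'M[C]_(N, m))).

Definition companL (Ls : 'I_l -> 'M[C]_(p, N)) : 'M[C]_(p, sz) :=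
  \mxrow_(k < l) Ls k.

Definition companV (n : nat) (S : 'M[C]_(N, n)) : 'M[C]_(sz, \sum_(i < l) n) :=
  \mxblock_(i < l, k < l) (if i == k then S else (0 : 'M[C]_(N, n))).
End Companion.

(* Main.v *)
Require Import Defs.
From mathcomp Require Import all_boot all_order all_algebra zify.
Set Implicit Arguments.
Unset Strict Implicit.
Unset Printing Implicit Defensive.
Import Order.TTheory GRing.Theory Num.Theory.
Local Open Scope ring_scope.




Section Ctr.
Variable C : numClosedFieldType.

Lemma ctr_mul m n p (A : 'M[C]_(m, n)) (B : 'M[C]_(n, p)) :
  ctr (A *m B) = ctr B *m ctr A.
Proof. by rewrite /ctr map_mxM trmx_mul. Qed.

Lemma ctrK m n (A : 'M[C]_(m, n)) : ctr (ctr A) = A.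
Proof.
by apply/matrixP => i j; rewrite /ctr !mxE conjCK.
Qed.

Lemma ctrD m n (A B : 'M[C]_(m, n)) : ctr (A + B) = ctr A + ctr B.
Proof. by rewrite /ctr map_mxD linearD. Qed.

Lemma ctrN m n (A : 'M[C]_(m, n)) : ctr (- A) = - ctr A.
Proof. by rewrite /ctr map_mxN linearN. Qed.

Lemma ctrB m n (A B : 'M[C]_(m, n)) : ctr (A - B) = ctr A - ctr B.
Proof. by rewrite ctrD ctrN. Qed.

Lemma ctrZ m n a (A : 'M[C]_(m, n)) : ctr (a *: A) = a^* *: ctr A.
Proof. by rewrite /ctr map_mxZ linearZ. Qed.

Lemma ctr0 m n : ctr (0 : 'M[C]_(m, n)) = 0.
Proof. by rewrite /ctr map_mx0 trmx0. Qed.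

Lemma ctr1 n : ctr (1%:M : 'M[C]_n) = 1%:M.
Proof. by rewrite /ctr map_mx1 trmx1. Qed.

Lemma ctr_block m1 m2 n1 n2 (a : 'M[C]_(m1, n1)) (b : 'M[C]_(m1, n2))
  (c : 'M[C]_(m2, n1)) (d : 'M[C]_(m2, n2)) :
  ctr (block_mx a b c d) = block_mx (ctr a) (ctr c) (ctr b) (ctr d).
Proof. by rewrite /ctr map_block_mx tr_block_mx. Qed.

Lemma ctr_col m1 m2 n (a : 'M[C]_(m1, n)) (b : 'M[C]_(m2, n)) :
  ctr (col_mx a b) = row_mx (ctr a) (ctr b).
Proof. by rewrite /ctr map_col_mx tr_col_mx. Qed.

Lemma ctr_row m n1 n2 (a : 'M[C]_(m, n1)) (b : 'M[C]_(m, n2)) :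
  ctr (row_mx a b) = col_mx (ctr a) (ctr b).
Proof. by rewrite /ctr map_row_mx tr_row_mx. Qed.

End Ctr.



Section Core.
Variable C : numClosedFieldType.

Lemma moment_core (K q m : nat) (E A W : 'M[C]_K) (Bf : 'M[C]_(K, m))
  (L : 'M[C]_(m, K)) (V : 'M[C]_(K, q)) (Wn : 'M[C]_q) (s0 : C) (j : nat) :
  s0 \is Num.real -> (s0 *: E - A) \in unitmx ->
  (s0 *: (ctr V *m E *m V) - ctr V *m A *m V) \in unitmx ->
  ctr (W *m E) = W *m E -> ctr (W *m A) = W *m A -> ctr L = W *m Bf ->
  ctr V *m (W *m E) *m V = Wn *m (ctr V *m E *m V) ->
  ctr V *m (W *m A) *m V = Wn *m (ctr V *m A *m V) ->
  (forall i, (i < j)%N -> exists X : 'M[C]_(q, m),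
       Mmx E A s0 ^+ i *m Rmx E A Bf s0 = V *m X) ->
  moment_identity E A L V s0 j.
Proof.
move=> s0r Zu Znu hWE hWA hL hE hA kry.
set Z := s0 *: E - A.
set En := ctr V *m E *m V; set An := ctr V *m A *m V.
set Zn := s0 *: En - An.
have hWZ : ctr (W *m Z) = W *m Z.
  by rewrite /Z mulmxBr -scalemxAr ctrB ctrZ hWE hWA conj_Creal.
have ZK : Z *m invmx Z = 1%:M by rewrite mulmxV.
have ZK' : invmx Z *m Z = 1%:M by rewrite mulVmx.
set M := Mmx E A s0.
have c1 : forall i, ctr (M ^+ i *m Rmx E A Bf s0) *m W *m Z = L *m M ^+ i.
  elim=> [|i IH].
    rewrite expr0 mul1mx -mulmxA -hWZ -ctr_mul /Rmx mulmxA -(mulmxA W Z).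
    by rewrite -/Z ZK mulmx1 -hL ctrK mulmx1.
  rewrite [in LHS]exprS -mulmxE -(mulmxA M) ctr_mul [in RHS]exprSr -mulmxE.
  have hM : ctr M *m (W *m Z) = W *m E.
    rewrite /M /Mmx -/Z ctr_mul -mulmxA -hWZ -ctr_mul -mulmxA ZK mulmx1.
    by rewrite -ctr_mul hWE.
  rewrite -!mulmxA hM.
  have -> : W *m E = W *m Z *m (invmx Z *m E) by rewrite -mulmxA (mulmxA Z) ZK mul1mx.
  rewrite mulmxA (mulmxA (ctr _) W Z) IH /M /Mmx -/Z !mulmxA.
  done.
have c2 : forall i, L *m M ^+ i *m invmx Z = ctr (M ^+ i *m Rmx E A Bf s0) *m W.
  by move=> i; rewrite -c1 -mulmxA ZK mulmx1.
have hZ : ctr V *m (W *m Z) *m V = Wn *m Zn.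
  rewrite /Z /Zn !mulmxBr !mulmxBl -(scalemxAr s0 W E) -(scalemxAr s0 Wn En).
  by rewrite -scalemxAr -scalemxAl hE hA.
elim=> [|i IH] lt; first by rewrite !expr0 !mulmx1.
have IH' := IH (ltnW lt).
have [X hX] := kry i lt.
have e1 : L *m M ^+ i.+1 *m V = ctr X *m (Wn *m En).
  rewrite exprSr -mulmxE (mulmxA L) {2}/M /Mmx -/Z (mulmxA (L *m M ^+ i)) c2 hX ctr_mul -hE.
  by rewrite !mulmxA.
have e0 : L *m M ^+ i *m V = ctr X *m (Wn *m Zn).
  rewrite -hZ.
  have -> : L *m M ^+ i = L *m M ^+ i *m invmx Z *m Z by rewrite -mulmxA ZK' mulmx1.
  by rewrite c2 hX ctr_mul !mulmxA.
rewrite e1 exprSr -mulmxE IH' in e0 *.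
rewrite /Mn -/En -/An -/Zn.
have -> : ctr X *m (Wn *m En) = ctr X *m (Wn *m Zn) *m (invmx Zn *m En).
  by rewrite -!mulmxA (mulmxA Zn) mulmxV // mul1mx.
by rewrite -e0 !mulmxA.
Qed.
End Core.



Section Kry.
Variable C : numClosedFieldType.
Variables (K m : nat) (E A : 'M[C]_K) (B : 'M[C]_(K, m)) (s0 : C).

Lemma defl_step_ge k S l : (S <= defl_step E A B s0 k S l)%MS.
Proof. by rewrite /defl_step; case: ifP => _; [exact: submx_refl | exact: addsmxSl]. Qed.

Lemma defl_step_kv k S l : (kv E A B s0 k l <= defl_step E A B s0 k S l)%MS.
Proof. by rewrite /defl_step; case: ifP => // _; exact: addsmxSr. Qed.

Lemma fold_props k (s : seq 'I_m) : forall S,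
  (S <= foldl (defl_step E A B s0 k) S s)%MS /\
  (forall l, l \in s -> (kv E A B s0 k l <= foldl (defl_step E A B s0 k) S s)%MS).
Proof.
elim: s => [|x s IH] S /=; first by split=> //; exact: submx_refl.
have [h1 h2] := IH (defl_step E A B s0 k S x).
split; first exact: submx_trans (defl_step_ge k S x) h1.
move=> l; rewrite inE => /orP[/eqP->|ls]; last exact: h2.
exact: submx_trans (defl_step_kv k S x) h1.
Qed.

Lemma span_mono k j : (k <= j)%N -> (span_upto E A B s0 k <= span_upto E A B s0 j)%MS.
Proof.
elim: j => [|j IH]; first by rewrite leqn0 => /eqP->; exact: submx_refl.
rewrite leq_eqVlt => /orP[/eqP->|]; first exact: submx_refl.
rewrite ltnS => /IH h; apply: submx_trans h _ => /=.
exact: (fold_props j (enum 'I_m) (span_upto E A B s0 j)).1.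
Qed.

Lemma kv_in_span k l j : (k < j)%N -> (kv E A B s0 k l <= span_upto E A B s0 j)%MS.
Proof.
move=> kj; apply: submx_trans (span_mono kj) => /=.
by apply: (fold_props k (enum 'I_m) (span_upto E A B s0 k)).2; rewrite mem_enum.
Qed.

Lemma kry_range q (Vt : 'M[C]_(q, K)) j :
  (krylov_row_space E A B s0 j <= Vt)%MS ->
  forall k, (k < j)%N -> exists X : 'M[C]_(q, m),
    Mmx E A s0 ^+ k *m Rmx E A B s0 = Vt^T *m X.
Proof.
move=> hV k kj.
have : ((Mmx E A s0 ^+ k *m Rmx E A B s0)^T <= Vt)%MS.
  apply/row_subP => l; apply: submx_trans hV.
  have -> : row l (Mmx E A s0 ^+ k *m Rmx E A B s0)^T = kv E A B s0 k l.
    by rewrite /kv tr_col.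
  exact: kv_in_span.
case/submxP => D hD; exists D^T.
by rewrite -[LHS]trmxK hD trmx_mul.
Qed.
End Kry.



Section CaseA.
Variable C : numClosedFieldType.

Lemma caseA (N N0 m n : nat) (P0 P1 : 'M[C]_N) (F : 'M[C]_(N, N0)) (G : 'M[C]_N0)
  (B : 'M[C]_(N, m)) (s0 : C) (j : nat) (V1 : 'M[C]_(N, n)) (V2 : 'M[C]_(N0, n)) :
  P0 = ctr P0 -> P1 = ctr P1 -> G = ctr G ->
  (krylov_row_space (block_mx P1 0 0 G) (block_mx (- P0) (- F) (ctr F) 0)
      (col_mx B (0 : 'M[C]_(N0, m))) s0 j <= (col_mx V1 V2)^T)%MS ->
  s0 \is Num.real ->
  (s0 *: block_mx P1 0 0 G - block_mx (- P0) (- F) (ctr F) 0) \in unitmx ->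
  (s0 *: (ctr (block_mx V1 0 0 V2) *m block_mx P1 0 0 G *m block_mx V1 0 0 V2)
     - ctr (block_mx V1 0 0 V2) *m block_mx (- P0) (- F) (ctr F) 0 *m block_mx V1 0 0 V2)
     \in unitmx ->
  moment_identity (block_mx P1 0 0 G) (block_mx (- P0) (- F) (ctr F) 0)
    (row_mx (ctr B) (0 : 'M[C]_(m, N0))) (block_mx V1 0 0 V2) s0 j.
Proof.
move=> hP0 hP1 hG hK s0r Zu Znu.
pose J : 'M[C]_(N + N0) := block_mx 1%:M 0 0 (- 1%:M).
pose Jn : 'M[C]_(n + n) := block_mx 1%:M 0 0 (- 1%:M).
apply: (moment_core (W:=J) (Wn:=Jn) (Bf:=col_mx B 0)) => //.
- rewrite /J mulmx_block !(mul0mx, mulmx0, mul1mx, mulNmx, addr0, add0r).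
  by rewrite ctr_block !ctr0 ctrN -hP1 -hG.
- rewrite /J mulmx_block !(mul0mx, mulmx0, mul1mx, mulNmx, addr0, add0r, opprK).
  by rewrite ctr_block !ctrN ctrK -hP0 ctr0.
- rewrite ctr_row ctrK ctr0 /J mul_block_col.
  by rewrite !(mul0mx, mulmx0, mul1mx, mulNmx, addr0, add0r, oppr0).
- rewrite /J /Jn ctr_block !ctr0 !mulmx_block.
  by rewrite !(mul0mx, mulmx0, mul1mx, mulNmx, mulmxN, addr0, add0r, oppr0).
- rewrite /J /Jn ctr_block !ctr0 !mulmx_block.
  by rewrite !(mul0mx, mulmx0, mul1mx, mulNmx, mulmxN, addr0, add0r, oppr0).
- move=> i ij; have [X hX] := kry_range hK ij.
  exists (col_mx X X); rewrite hX trmxK mul_block_col mul_col_mx.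
  by rewrite !(mul0mx, addr0, add0r).
Qed.
End CaseA.



Section Blk.
Variable C : numClosedFieldType.

Lemma ctr_mxblock (l N M : nat) (B : 'I_l -> 'I_l -> 'M[C]_(N, M)) :
  ctr (\mxblock_(i < l, k < l) B i k) = \mxblock_(i < l, k < l) ctr (B k i).
Proof.
apply/matrixP => a b; by rewrite !mxE.
Qed.

Lemma ctr_mxrow (l p N : nat) (B : 'I_l -> 'M[C]_(p, N)) :
  ctr (\mxrow_(k < l) B k) = \mxcol_(k < l) ctr (B k).
Proof.
apply/matrixP => a b; by rewrite !mxE.
Qed.

Lemma sum_delta (l : nat) (V : nmodType) (F : nat -> V) (c : nat) :
  \sum_(r < l) (if (r == c :> nat) then F r else 0) = if (c < l)%N then F c else 0.
Proof.
case: ltnP => hc.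
  rewrite (bigD1 (Ordinal hc)) //= eqxx big1 ?addr0 // => r.
  by rewrite -val_eqE /= => /negbTE ->.
by rewrite big1 // => r _; case: eqP => // e; move: (ltn_ord r); rewrite e ltnNge hc.
Qed.

End Blk.

Section Blk2.
Variable C : numClosedFieldType.

Lemma lmul_diag (l a b c : nat) (X : 'M[C]_(a, b)) (B : 'I_l -> 'I_l -> 'M[C]_(b, c)) :
  (\mxblock_(i < l, k < l) (if i == k then X else 0)) *m (\mxblock_(i < l, k < l) B i k) =
  \mxblock_(i < l, k < l) (X *m B i k).
Proof.
rewrite mul_mxblock; apply/eq_mxblock => i k.
rewrite (bigD1 i) //= eqxx big1 ?addr0 // => r /negbTE.
by rewrite eq_sym => ->; rewrite mul0mx.
Qed.

Lemma rmul_diag (l a b c : nat) (Y : 'M[C]_(b, c)) (B : 'I_l -> 'I_l -> 'M[C]_(a, b)) :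
  (\mxblock_(i < l, k < l) B i k) *m (\mxblock_(i < l, k < l) (if i == k then Y else 0)) =
  \mxblock_(i < l, k < l) (B i k *m Y).
Proof.
rewrite mul_mxblock; apply/eq_mxblock => i k.
rewrite (bigD1 k) //= eqxx big1 ?addr0 // => r /negbTE ->.
by rewrite mulmx0.
Qed.

Lemma ctr_companV (l N n : nat) (S : 'M[C]_(N, n)) :
  ctr (companV l S) = \mxblock_(i < l, k < l) (if i == k then ctr S else 0).
Proof.
rewrite /companV ctr_mxblock; apply/eq_mxblock => i k.
by rewrite eq_sym; case: eqP => _; rewrite ?ctr0.
Qed.

Lemma conjV (l N n : nat) (S : 'M[C]_(N, n)) (B : 'I_l -> 'I_l -> 'M[C]_N) :
  ctr (companV l S) *m (\mxblock_(i < l, k < l) B i k) *m companV l S =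
  \mxblock_(i < l, k < l) (ctr S *m B i k *m S).
Proof. by rewrite ctr_companV lmul_diag /companV rmul_diag. Qed.
End Blk2.



Section WHG.
Variable C : numClosedFieldType.
Variables (l N : nat) (Qf : nat -> 'M[C]_N).

Definition Wc : 'M[C]_(\sum_(i < l) N) :=
  \mxblock_(i < l, k < l) (if is_last k then (if (i == 0 :> nat) then 1%:M else 0)
                           else Qf (i + k + 1)%N).
Definition Hc : 'M[C]_(\sum_(i < l) N) := \mxblock_(i < l, k < l) Qf (i + k + 1)%N.
Definition Gc : 'M[C]_(\sum_(i < l) N) :=
  \mxblock_(i < l, k < l) (if (k == 0 :> nat) then (if (i == 0 :> nat) then - Qf 0%N else 0)
                           else if (i == 0 :> nat) then 0 else Qf (i + k)%N).

Hypothesis Qz : forall r, (l < r)%N -> Qf r = 0.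

Lemma WE (Pl : 'M[C]_N) : Pl = Qf l -> Wc *m companE l Pl = Hc.
Proof.
move=> hPl; rewrite /Wc /companE /Hc mul_mxblock; apply/eq_mxblock => i k.
pose F (r : nat) := (if r.+1 == l then (if (i == 0 :> nat) then 1%:M else 0)
                     else Qf (i + r + 1)%N) *m (if r.+1 == l then Pl else 1%:M).
transitivity (\sum_(r < l) (if (r == k :> nat) then F r else 0)).
  apply: eq_bigr => r _; rewrite /F /is_last.
  case: (r =P k) => [->|ne]; first by rewrite eqxx.
  by rewrite mulmx0; case: eqP => // /val_inj.
rewrite sum_delta ltn_ord /F.
case: eqP => hk; last by rewrite mulmx1.
case: eqP => hi; first by rewrite mul1mx hi add0n addn1 hk hPl.
by rewrite mul0mx Qz //; lia.
Qed.

Lemma WA (Pk : 'I_l -> 'M[C]_N) : (forall k, Pk k = Qf k) ->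
  Wc *m companA Pk = Gc.
Proof.
move=> hPk; rewrite /Wc /companA /Gc mulmxN mul_mxblock -mxblockN.
apply/eq_mxblock => i k.
pose F1 (r : nat) := if (i == 0 :> nat) then Qf k else 0.
pose F2 (r : nat) := if (k == 0 :> nat) then 0 else - Qf (i + k)%N.
transitivity (- (\sum_(r < l) (if (r == l.-1 :> nat) then F1 r else 0)
               + \sum_(r < l) (if (r == k.-1 :> nat) then F2 r else 0))).
  rewrite -big_split /=; congr (- _); apply: eq_bigr => r _.
  rewrite /F1 /F2 /is_last hPk.
  have rl := ltn_ord r; have kl := ltn_ord k.
  case: eqP => hr.
    have -> : (r == l.-1 :> nat) by lia.
    have kl' := ltn_ord k.
    by case: eqP => hi; rewrite ?mul1mx ?mul0mx;
      (case: eqP => hk; last by rewrite addr0);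
      (case: eqP => hk0; first by rewrite addr0); lia.
  have -> : (r == l.-1 :> nat) = false by apply/eqP; lia.
  rewrite add0r.
  case: eqP => hk.
    have -> : (r == k.-1 :> nat) by lia.
    have -> : (k == 0 :> nat) = false by apply/eqP; lia.
    by rewrite mulmxN mulmx1 hk addn1 addnS.
  rewrite mulmx0; case: eqP => // hk'.
  by case: eqP => // hk0; lia.
have l0 : (0 < l)%N by move: (ltn_ord k); lia.
rewrite !sum_delta.
have -> : (l.-1 < l)%N by lia.
have -> : (k.-1 < l)%N by move: (ltn_ord k); lia.
rewrite /F1 /F2.
have [hi|hi] := eqVneq (i : nat) 0%N; have [hk|hk] := eqVneq (k : nat) 0%N;
  rewrite ?hi ?hk ?(negbTE hi) ?(negbTE hk) /=.
- by rewrite addr0.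
- by rewrite add0n subrr oppr0.
- by rewrite addr0 oppr0.
- by rewrite add0r opprK.
Qed.

Hypothesis Qh : forall r, ctr (Qf r) = Qf r.

Lemma Hc_herm : ctr Hc = Hc.
Proof.
rewrite /Hc ctr_mxblock; apply/eq_mxblock => i k.
by rewrite Qh (addnC k).
Qed.

Lemma Gc_herm : ctr Gc = Gc.
Proof.
rewrite /Gc ctr_mxblock; apply/eq_mxblock => i k.
case: eqP => hk; case: eqP => hi; rewrite ?ctr0 ?ctrN ?Qh //.
by rewrite addnC.
Qed.

End WHG.



Section CaseB.
Variable C : numClosedFieldType.

Lemma caseB (l N m n : nat) (P : 'I_l.+1 -> 'M[C]_N) (B : 'M[C]_(N, m))
  (Ls : 'I_l -> 'M[C]_(m, N)) (s0 : C) (j : nat) (S : 'M[C]_(N, n)) :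
  let E := companE l (P ord_max) in
  let A := companA (fun k : 'I_l => P (widen_ord (leqnSn l) k)) in
  let Bf := companB l B in
  let Lf := companL Ls in
  let Vn := companV l S in
  (1 <= l)%N ->
  (forall i, P i = ctr (P i)) ->
  (forall k : 'I_l, Ls k = if (k == 0 :> nat)%N then ctr B else 0) ->
  ctr S *m S = 1%:M ->
  (krylov_row_space E A Bf s0 j <= Vn^T)%MS ->
  s0 \is Num.real -> (s0 *: E - A) \in unitmx ->
  (s0 *: (ctr Vn *m E *m Vn) - ctr Vn *m A *m Vn) \in unitmx ->
  moment_identity E A Lf Vn s0 j.
Proof.
move=> E A Bf Lf Vn l1 hP hLs hS hK s0r Zu Znu.
pose Qf (r : nat) : 'M[C]_N := if (r <= l)%N then P (inord r) else 0.
pose Qf' (r : nat) : 'M[C]_n := ctr S *m Qf r *m S.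
have hPl : P ord_max = Qf l.
  by rewrite /Qf leqnn; congr P; apply: val_inj; rewrite /= inordK.
have hPk : forall k : 'I_l, P (widen_ord (leqnSn l) k) = Qf k.
  move=> k; rewrite /Qf ltnW //; congr P; apply: val_inj; rewrite /= inordK //.
  by rewrite ltnS ltnW.
have Qz : forall r, (l < r)%N -> Qf r = 0.
  by move=> r lr; rewrite /Qf leqNgt lr.
have Qz' : forall r, (l < r)%N -> Qf' r = 0.
  by move=> r lr; rewrite /Qf' Qz // mulmx0 mul0mx.
have Qh : forall r, ctr (Qf r) = Qf r.
  by move=> r; rewrite /Qf; case: ifP => _; rewrite ?ctr0 // -hP.
have Qh' : forall r, ctr (Qf' r) = Qf' r.
  by move=> r; rewrite /Qf' !ctr_mul ctrK Qh mulmxA.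
have hEn : ctr Vn *m E *m Vn = companE l (ctr S *m P ord_max *m S).
  rewrite /Vn /E /companE conjV; apply/eq_mxblock => i k.
  by case: eqP => _; [case: ifP => _; rewrite ?mulmx1 | rewrite mulmx0 mul0mx].
have hAn : ctr Vn *m A *m Vn =
    companA (fun k : 'I_l => ctr S *m P (widen_ord (leqnSn l) k) *m S).
  rewrite /Vn /A /companA mulmxN mulNmx conjV; congr (- _); apply/eq_mxblock => i k.
  case: ifP => _ //; case: ifP => _; last by rewrite mulmx0 mul0mx.
  by rewrite mulmxN mulNmx mulmx1 hS.
apply: (moment_core (W := Wc l Qf) (Wn := Wc l Qf') (Bf := Bf)) => //.
- by rewrite (WE Qz hPl) (Hc_herm l Qh).
- by rewrite (WA hPk) (Gc_herm l Qh).
- rewrite /Lf /companL ctr_mxrow /Bf /companB /Wc mul_mxblock_mxrow.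
  apply/eq_mxcol => i; symmetry.
  pose F (r : nat) : 'M[C]_(N, m) := if (i == 0 :> nat) then B else 0.
  transitivity (\sum_(r < l) (if (r == l.-1 :> nat) then F r else 0)).
    apply: eq_bigr => r _; rewrite /is_last /F.
    have rl := ltn_ord r.
    case: eqP => hr.
      have -> : (r == l.-1 :> nat) by lia.
      by case: eqP => _; rewrite ?mul1mx ?mul0mx.
    have -> : (r == l.-1 :> nat) = false by apply/eqP; lia.
    by rewrite mulmx0.
  rewrite sum_delta.
  have -> : (l.-1 < l)%N by lia.
  by rewrite hLs /F; case: eqP => _; rewrite ?ctrK ?ctr0.
- rewrite (WE Qz hPl) hEn (WE Qz' (Pl := ctr S *m P ord_max *m S)); last by rewrite hPl.
  by rewrite /Hc conjV.
- rewrite (WA hPk) hAn (WA (Qf := Qf') (Pk := fun k : 'I_l => ctr S *m P (widen_ord (leqnSn l) k) *m S)); last by move=> k; rewrite hPk.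
  rewrite /Gc conjV; apply/eq_mxblock => i k.
  by case: ifP => _; case: ifP => _; rewrite ?mulmx0 ?mul0mx ?mulmxN ?mulNmx.
- move=> i ij; have [X hX] := kry_range hK ij.
  by exists X; rewrite hX trmxK.
Qed.
End CaseB.

Theorem proposition1 (C : numClosedFieldType) :
  (* case (a), P_{-1} = F1 G F2^H *)
  (forall (N N0 m : nat) (P0 P1 : 'M[C]_N) (F1 F2 : 'M[C]_(N, N0)) (G : 'M[C]_N0)
          (B : 'M[C]_(N, m)) (L : 'M[C]_(m, N)) (D : 'M[C]_m) (s0 : C) (j : nat)
          (V1 : 'M[C]_(N, nblk (block_mx P1 0 0 (ctr G))
                                 (block_mx (- P0) (- (F1 *m G)) (ctr (F2 *m G)) 0)
                                 (col_mx B 0) s0 j))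
          (V2 : 'M[C]_(N0, nblk (block_mx P1 0 0 (ctr G))
                                 (block_mx (- P0) (- (F1 *m G)) (ctr (F2 *m G)) 0)
                                 (col_mx B 0) s0 j)),
     let E := block_mx P1 0 0 (ctr G) in
     let A := block_mx (- P0) (- (F1 *m G)) (ctr (F2 *m G)) 0 in
     let Bf := col_mx B (0 : 'M[C]_(N0, m)) in
     let Lf := row_mx L (0 : 'M[C]_(m, N0)) in
     let Vn := block_mx V1 0 0 V2 in
     L = ctr B -> P0 = ctr P0 -> P1 = ctr P1 -> F1 = F2 -> G = ctr G ->
     ((col_mx V1 V2)^T == krylov_row_space E A Bf s0 j)%MS ->
     (ctr V2 *m G *m V2) \in unitmx ->
     common_hyps E A Bf Vn s0 j ->
     moment_identity E A Lf Vn s0 j) /\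
  (* case (a), P_{-1} = F1 G^{-1} F2^H *)
  (forall (N N0 m : nat) (P0 P1 : 'M[C]_N) (F1 F2 : 'M[C]_(N, N0)) (G : 'M[C]_N0)
          (B : 'M[C]_(N, m)) (L : 'M[C]_(m, N)) (D : 'M[C]_m) (s0 : C) (j : nat)
          (V1 : 'M[C]_(N, nblk (block_mx P1 0 0 G)
                                 (block_mx (- P0) (- F1) (ctr F2) 0) (col_mx B 0) s0 j))
          (V2 : 'M[C]_(N0, nblk (block_mx P1 0 0 G)
                                 (block_mx (- P0) (- F1) (ctr F2) 0) (col_mx B 0) s0 j)),
     let E := block_mx P1 0 0 G in
     let A := block_mx (- P0) (- F1) (ctr F2) 0 in
     let Bf := col_mx B (0 : 'M[C]_(N0, m)) in
     let Lf := row_mx L (0 : 'M[C]_(m, N0)) in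
     let Vn := block_mx V1 0 0 V2 in
     G \in unitmx ->
     L = ctr B -> P0 = ctr P0 -> P1 = ctr P1 -> F1 = F2 -> G = ctr G ->
     ((col_mx V1 V2)^T == krylov_row_space E A Bf s0 j)%MS ->
     (ctr V2 *m G *m V2) \in unitmx ->
     common_hyps E A Bf Vn s0 j ->
     moment_identity E A Lf Vn s0 j) /\
  (* case (b), l-th order system in companion form *)
  (forall (l N m : nat) (P : 'I_l.+1 -> 'M[C]_N) (B : 'M[C]_(N, m))
          (Ls : 'I_l -> 'M[C]_(m, N)) (D : 'M[C]_m) (s0 : C) (j : nat)
          (S : 'M[C]_(N, nblk (companE l (P ord_max))
                                (companA (fun k : 'I_l => P (widen_ord (leqnSn l) k)))
                                (companB l B) s0 j)),
     let E := companE l (P ord_max) in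
     let A := companA (fun k : 'I_l => P (widen_ord (leqnSn l) k)) in
     let Bf := companB l B in
     let Lf := companL Ls in
     let Vn := companV l S in
     (1 <= l)%N ->
     (forall i, P i = ctr (P i)) ->
     (forall k : 'I_l, Ls k = if (k == 0 :> nat)%N then ctr B else 0) ->
     ctr S *m S = 1%:M ->
     (krylov_row_space E A Bf s0 j <= Vn^T)%MS ->
     common_hyps E A Bf Vn s0 j ->
     moment_identity E A Lf Vn s0 j).
Proof.
split; [|split].
- move=> N N0 m P0 P1 F1 F2 G B L D s0 j V1 V2 E A Bf Lf Vn hL hP0 hP1 hF hG hK hGu.
  move=> [s0r [_ [Zu [_ [_ [_ Znu]]]]]].
  subst F2; rewrite /Lf hL.
  case/andP: hK => _ hK.
  apply: caseA => //; first by rewrite ctrK -hG.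
- move=> N N0 m P0 P1 F1 F2 G B L D s0 j V1 V2 E A Bf Lf Vn hGu0 hL hP0 hP1 hF hG hK hGu.
  move=> [s0r [_ [Zu [_ [_ [_ Znu]]]]]].
  subst F2; rewrite /Lf hL.
  case/andP: hK => _ hK.
  by apply: caseA.
- move=> l N m P B Ls D s0 j S E A Bf Lf Vn l1 hP hLs hS hK.
  move=> [s0r [_ [Zu [_ [_ [_ Znu]]]]]].
  exact: caseB.
Qed.
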